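(* For all positive integers $n,k$, $$S^+(n+k) \geq S^+(n+1)\,S^+(k).$$
   Context: A set $A \subseteq \mathbb{N}$ is sum-free if for all $(a,b)\in A^2$ (allowing $a=b$), $a+b \notin A$. For positive integers $p,n$, an S-template with $n$ colors and width $p$ is a partition of $\{1,\dots,p\}$ into $n$ sum-free subsets $A_1,\dots,A_n$ such that for every $i \in \{1,\dots,n-1\}$ (i.e. every subset except $A_n$) and all $(x,y)\in A_i^2$: if $x+y>p$ then $x+y-p \notin A_i$. $S^+(n)$ denotes the greatest width of an S-template with $n$ colors. *)

(* Defs.v *)
From mathcomp Require Import all_boot.
Set Implicit Arguments. Unset Strict Implicit. Unset Printing Implicit Defensive.

(* An S-template with n colors and width p, encoded as a coloring
   c : nat -> nat of {1,...,p}; the part A_i is {x in [1,p] | c x = i},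
   colors range over 1..n, and A_n (color n) is the exceptional part. *)
Definition S_template (n p : nat) (c : nat -> nat) : Prop :=
  [/\ (forall x, 1 <= x <= p -> 1 <= c x <= n),
      (forall x y, 1 <= x <= p -> 1 <= y <= p -> x + y <= p ->
         c x = c y -> c (x + y) <> c x)
    &
      (forall x y, 1 <= x <= p -> 1 <= y <= p -> c x = c y -> c x < n ->
         p < x + y -> c (x + y - p) <> c x)].

Definition has_S_template (n p : nat) : Prop :=
  0 < p /\ exists c, S_template n p c.

Definition is_Splus (n m : nat) : Prop :=
  has_S_template n m /\ (forall p, has_S_template n p -> p <= m).

(* Main.v *)
Require Import Defs.
From mathcomp Require Import all_boot zify.

Definition RR (a x : nat) := ((x.-1) %% a).+1.
Definition QQ (a x : nat) := (x.-1) %/ a.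

Lemma dec a x : 0 < a -> 0 < x -> x = a * QQ a x + RR a x /\ 1 <= RR a x <= a.
Proof.
move=> a0 x0; rewrite /RR /QQ; have := divn_eq x.-1 a; have := ltn_pmod x.-1 a0.
lia.
Qed.

Lemma uniqd a x j r : 0 < a -> x = a * j + r -> 1 <= r <= a -> RR a x = r /\ QQ a x = j.
Proof.
move=> a0 Ex Hr; have E : x.-1 = j * a + r.-1 by rewrite Ex mulnC; lia.
rewrite /RR /QQ E modnMDl divnMDl // modn_small ?divn_small; lia.
Qed.

Lemma qb a b x : 0 < a -> 0 < x -> x <= a * b -> QQ a x < b.
Proof.
move=> a0 x0 xb; have [E H] := @dec a x a0 x0.
rewrite -(@ltn_pmul2l a) //; lia.
Qed.

Lemma prod_tmpl n k a b f g : 0 < n -> 0 < k -> 0 < a -> 0 < b ->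
  S_template (n + 1) a f -> S_template k b g ->
  S_template (n + k) (a * b)
    (fun x => if f (RR a x) <= n then f (RR a x) else n + g (QQ a x).+1).
Proof.
move=> n0 k0 a0 b0 [f1 f2 f3] [g1 g2 g3]; split.
- move=> x Hx; have [E H] := @dec a x a0 (proj1 (andP Hx)).
  have := f1 _ H; have : QQ a x < b by apply: qb => //; lia.
  move=> Hq; have := g1 (QQ a x).+1 ltac:(lia).
  case: ifP => _; lia.
- move=> x y Hx Hy Hxy.
  have [Ex Rx] := @dec a x a0 (proj1 (andP Hx)).
  have [Ey Ry] := @dec a y a0 (proj1 (andP Hy)).
  have Qz : QQ a (x + y) < b by apply: qb => //; lia.
  have Qx : QQ a x < b by apply: qb => //; lia.
  have Qy : QQ a y < b by apply: qb => //; lia.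
  move: Ex Ey Rx Ry Qz Qx Qy.
  set rx := RR a x; set ry := RR a y; set jx := QQ a x; set jy := QQ a y.
  move=> Ex Ey Rx Ry Qz Qx Qy.
  have fx := f1 _ Rx; have fy := f1 _ Ry.
  have gx := g1 jx.+1 ltac:(lia); have gy := g1 jy.+1 ltac:(lia).
  have Exy : x + y = a * (jx + jy) + (rx + ry) by rewrite Ex Ey mulnDr; lia.
  case: (leqP (rx + ry) a) => Hs.
  + have [Hr Hq] := @uniqd _ _ _ _ a0 Exy ltac:(lia).
    rewrite Hr Hq in Qz *. have gz := g1 (jx + jy).+1 ltac:(lia).
    have fs := f2 rx ry Rx Ry Hs.
    have fz := f1 (rx + ry) ltac:(lia).
    case: (leqP (f rx) n) => hx; case: (leqP (f ry) n) => hy; case: (leqP (f (rx + ry)) n) => hz; try lia.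
  + have Exy' : x + y = a * (jx + jy).+1 + (rx + ry - a) by rewrite Exy mulnS; lia.
    have [-> Hq] := @uniqd _ _ _ _ a0 Exy' ltac:(lia).
    rewrite Hq in Qz *. have gz := g1 (jx + jy).+2 ltac:(lia).
    have fs := f3 rx ry Rx Ry.
    have fz := f1 (rx + ry - a) ltac:(lia).
    case: (leqP (f rx) n) => hx; case: (leqP (f ry) n) => hy; case: (leqP (f (rx + ry - a)) n) => hz; try lia.
    move=> e; have := g2 jx.+1 jy.+1 ltac:(lia) ltac:(lia) ltac:(lia) ltac:(lia). rewrite (_ : jx.+1 + jy.+1 = (jx + jy).+2); [lia | lia].



- move=> x y Hx Hy Hc Hlt Hp.
  have [Ex Rx] := @dec a x a0 (proj1 (andP Hx)).
  have [Ey Ry] := @dec a y a0 (proj1 (andP Hy)).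
  have Qx : QQ a x < b by apply: qb => //; lia.
  have Qy : QQ a y < b by apply: qb => //; lia.
  move: Ex Ey Rx Ry Qx Qy Hc Hlt.
  set rx := RR a x; set ry := RR a y; set jx := QQ a x; set jy := QQ a y.
  move=> Ex Ey Rx Ry Qx Qy Hc Hlt.
  have fx := f1 _ Rx; have fy := f1 _ Ry.
  have gx := g1 jx.+1 ltac:(lia); have gy := g1 jy.+1 ltac:(lia).
  have Exy : x + y = a * (jx + jy) + (rx + ry) by rewrite Ex Ey mulnDr; lia.
  case: (leqP (rx + ry) a) => Hs.
  + have Hb : b <= jx + jy.
      rewrite leqNgt; apply/negP => Hl.
      have : a * (jx + jy).+1 <= a * b by rewrite leq_mul2l Hl orbT.
      rewrite mulnS; lia.
    have Ez : x + y - a * b = a * (jx + jy - b) + (rx + ry).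
      rewrite mulnBr Exy.
      have : a * b <= a * (jx + jy) by rewrite leq_mul2l Hb orbT.
      lia.
    have [-> ->] := @uniqd _ _ _ _ a0 Ez ltac:(lia).
    have gz := g1 (jx + jy - b).+1 ltac:(lia).
    have fs := f2 rx ry Rx Ry Hs.
    have fz := f1 (rx + ry) ltac:(lia).
    move: Hc Hlt.
    case: (leqP (f rx) n) => hx; case: (leqP (f ry) n) => hy; case: (leqP (f (rx + ry)) n) => hz; try lia.
  + have Exy' : x + y = a * (jx + jy).+1 + (rx + ry - a) by rewrite Exy mulnS; lia.
    have Hb : b <= (jx + jy).+1.
      rewrite leqNgt; apply/negP => Hl.
      have : a * (jx + jy).+2 <= a * b by rewrite leq_mul2l Hl orbT.
      rewrite mulnS; lia.
    have Ez : x + y - a * b = a * ((jx + jy).+1 - b) + (rx + ry - a).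
      rewrite mulnBr Exy'.
      have : a * b <= a * (jx + jy).+1 by rewrite leq_mul2l Hb orbT.
      lia.
    have [-> ->] := @uniqd _ _ _ _ a0 Ez ltac:(lia).
    have gz := g1 ((jx + jy).+1 - b).+1 ltac:(lia).
    have fs := f3 rx ry Rx Ry.
    have fz := f1 (rx + ry - a) ltac:(lia).
    move: Hc Hlt.
    case: (leqP (f rx) n) => hx; case: (leqP (f ry) n) => hy; case: (leqP (f (rx + ry - a)) n) => hz; try lia.
    all: move=> e e2; first [ (have := fs ltac:(lia) ltac:(lia) Hs; lia) | (have := g3 jx.+1 jy.+1 ltac:(lia) ltac:(lia) ltac:(lia) ltac:(lia) ltac:(lia); rewrite (_ : jx.+1 + jy.+1 - b = ((jx + jy).+1 - b).+1); [lia | lia]) ].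



Qed.

Theorem corollary2p7 (n k a b c : nat) :
  0 < n -> 0 < k ->
  is_Splus (n + 1) a -> is_Splus k b -> is_Splus (n + k) c ->
  a * b <= c.
Proof.
move=> n0 k0 [[a0 [f Hf]] _] [[b0 [g Hg]] _] [_ Hc].
apply: Hc; split; first by rewrite muln_gt0 a0 b0.
eexists; exact: (@prod_tmpl _ _ _ _ _ _ n0 k0 a0 b0 Hf Hg).
Qed.
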